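(* For every $N\ge 1$, the only right Markov code for the one-sided full $N$-shift $(X_{[N]},\sigma_{[N]})$ over $\Sigma_{[N]}=\{1,\dots,N\}$ is the trivial right Markov code $\Sigma_{[N]}$ (the set of all words of length $1$).
   Context: For an $N\times N$ matrix $A$ with entries in $\{0,1\}$, $\Sigma_A=\{1,\dots,N\}$, $X_A$ is the set of sequences $(x_n)_{n\in\mathbb{N}}$ in $\Sigma_A$ with $A(x_n,x_{n+1})=1$ for all $n$, with shift $\sigma_A$; the full $N$-shift is the case where all entries of $A$ equal $1$. $B_k(X_A)$ is the set of admissible words of length $k$, $B_*(X_A)$ the union over $k\ge0$ (including the empty word). For a word $w=w_1\cdots w_\ell$, $\sigma_A(w)=w_2\cdots w_\ell$. A code is a nonempty $\mathcal{C}\subset B_*(X_A)$ such that any equality of concatenations $\omega(i_1)\cdots\omega(i_k)=\omega(j_1)\cdots\omega(j_n)$ of words of $\mathcal{C}$ forces $n=k$ and $\omega(i_m)=\omega(j_m)$ for all $m$; a prefix code is a code in which no word is a prefix of another. A finite prefix code $\mathcal{C}=\{\omega(1),\dots,\omega(M)\}\subset B_*(X_A)$, $\Sigma_{A(\mathcal{C})}=\{1,\dots,M\}$, is a right Markov code for $(X_A,\sigma_A)$ if: (i) for every $\gamma\in B_*(X_A)$ there is $\eta\in B_*(X_A)$ with $\gamma\eta\in B_*(X_A)$ and a unique finite sequence $(i_1,\dots,i_k)$ in $\Sigma_{A(\mathcal{C})}$ with $\gamma\eta=\omega(i_1)\cdots\omega(i_k)$; (ii) there is $L\in\mathbb{N}$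 such that for all $i_1,\dots,i_L$ with $\omega(i_1)\cdots\omega(i_L)\in B_*(X_A)$ there exist $j_1,\dots,j_k\in\Sigma_{A(\mathcal{C})}$ with $\sigma_A(\omega(i_1))\omega(i_2)\cdots\omega(i_L)=\omega(j_1)\cdots\omega(j_k)$; (iii) for every $i,j$ there are $n_1,\dots,n_l$ with $\omega(i)\omega(n_1)\cdots\omega(n_l)\omega(j)\in B_*(X_A)$. *)

(* Defs.v *)
From mathcomp Require Import all_boot.
Set Implicit Arguments. Unset Strict Implicit. Unset Printing Implicit Defensive.

(* Alphabet Sigma_A = 'I_N (relabelling of {1,...,N}); transition matrix
   A with {0,1} entries is represented as a boolean relation on 'I_N. *)

Definition in_XA (N : nat) (A : rel 'I_N) (x : nat -> 'I_N) : Prop :=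
  forall n, A (x n) (x n.+1).

Definition admissible (N : nat) (A : rel 'I_N) (w : seq 'I_N) : Prop :=
  exists x, in_XA A x /\ exists i, w = [seq x (i + k) | k <- iota 0 (size w)].

Definition full_rel (N : nat) : rel 'I_N := fun _ _ => true.

(* A finite set of words is given as a duplicate-free list C; omega(i) is
   the i-th entry. A finite sequence of indices (i_1..i_k) is identified with
   the list of code words [omega(i_1); ...; omega(i_k)] (omega is injective). *)
Definition in_code (N : nat) (C : seq (seq 'I_N)) (s : seq (seq 'I_N)) : bool :=
  all (fun w => w \in C) s.

Definition is_code (N : nat) (A : rel 'I_N) (C : seq (seq 'I_N)) : Prop :=
  C != [::] /\ (forall w, w \in C -> admissible A w) /\
  forall s t, in_code C s -> in_code C t -> flatten s = flatten t -> s = t.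

Definition is_prefix_code (N : nat) (A : rel 'I_N) (C : seq (seq 'I_N)) : Prop :=
  is_code A C /\ forall u v, u \in C -> v \in C -> u != v -> ~~ prefix u v.

Definition right_Markov_code (N : nat) (A : rel 'I_N) (C : seq (seq 'I_N)) : Prop :=
  uniq C /\ is_prefix_code A C /\
  (forall g, admissible A g -> exists eta, admissible A (g ++ eta) /\
      exists! s, in_code C s /\ g ++ eta = flatten s) /\
  (exists L, 0 < L /\ forall s, size s = L -> in_code C s ->
      admissible A (flatten s) ->
      exists t, in_code C t /\
        behead (head [::] s) ++ flatten (behead s) = flatten t) /\
  (forall u v, u \in C -> v \in C -> exists s, in_code C s /\
      admissible A (u ++ flatten s ++ v)).

(* Main.v *)
Require Import Defs.
From mathcomp Require Import all_boot.
From mathcomp Require Import zify.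

Lemma adm_full N (w : seq 'I_N) (a : 'I_N) : admissible (@full_rel N) w.
Proof.
exists (nth a w); split; first by [].
by exists 0; rewrite -[LHS](mkseq_nth a).
Qed.

Lemma all_flat (T : eqType) (p : pred T) (t : seq (seq T)) :
  all p (flatten t) -> forall v, v \in t -> all p v.
Proof.
elim: t => //= u t IH; rewrite all_cat => /andP[Hu Ht] v.
by rewrite inE => /orP[/eqP->|]; [|apply: IH].
Qed.

Lemma size_flat_nseq (T : Type) n (u : seq T) : size (flatten (nseq n u)) = n * size u.
Proof. by elim: n => //= n IH; rewrite size_cat IH mulSn. Qed.

Lemma all_flat_nseq (T : Type) (p : pred T) n (u : seq T) : all p u -> all p (flatten (nseq n u)).
Proof. by move=> hu; elim: n => //= n IH; rewrite all_cat hu IH. Qed.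

Lemma size_le_sumn (T : eqType) (C : seq (seq T)) u :
  u \in C -> size u <= sumn (map size C).
Proof.
elim: C => //= v C IH; rewrite inE => /orP[/eqP->|/IH]; lia.
Qed.

Lemma nseq_prefix (T : eqType) (a : T) i j : i <= j -> prefix (nseq i a) (nseq j a).
Proof.
move=> hij; rewrite -(subnKC hij) nseqD; exact: prefix_prefix.
Qed.

Theorem mainTheorem3 (N : nat) (C : seq (seq 'I_N)) :
  1 <= N -> right_Markov_code (@full_rel N) C ->
  forall w : seq 'I_N, w \in C <-> size w = 1.
Proof.
move=> _ [uC [[[CnE [_ Ccode]] Cpre] [Hi [[L [L0 Hii]] _]]]].
have nilC : [::] \notin C.
  apply/negP => h.
  have := Ccode [:: [::]] [::]; rewrite /in_code /= h => /(_ isT isT erefl). done.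
have key : forall a : 'I_N, [:: a] \in C.
  move=> a.
  set M := (sumn (map size C)).+1.
  have [eta [_ [s [[sC Hs] _]]]] := Hi (nseq M a) (@adm_full _ _ a).
  case: s sC Hs => [|u s'] sC Hs.
    by move: Hs => /(f_equal size); rewrite size_cat size_nseq.
  move: sC => /andP[uC' s'C]; rewrite [flatten _]/= in Hs.
  have su : size u <= M by have := @size_le_sumn _ _ _ uC'; rewrite /M => ?; apply: leqW.
  have Hu : u = nseq (size u) a.
    have E : u = take (size u) (nseq M a ++ eta) by rewrite Hs take_size_cat.
    rewrite {1}E take_cat size_nseq.
    case: ltnP => h; first by rewrite take_nseq // ltnW.
    have -> : size u = M by lia.
    by rewrite subnn take0 cats0.
  set k := size u in Hu.
  have k0 : 0 < k by rewrite /k lt0n size_eq0; apply: contraNneq nilC => <-.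
  have same : forall v, v \in C -> all (pred1 a) v -> v = u.
    move=> v vC /all_pred1P Hv; apply/eqP; apply: contraT => neq.
    case: (leqP (size v) k) => h.
      move: (Cpre v u vC uC' neq); by rewrite Hv Hu nseq_prefix.
    move: (Cpre u v uC' vC); rewrite eq_sym => /(_ neq).
    by rewrite Hv {1}Hu nseq_prefix // ltnW.
  case: L L0 Hii => // L' _ Hii.
  have inC : in_code C (nseq L'.+1 u) by rewrite /in_code all_nseq uC' orbT.
  have [t [tC Et]] := Hii (nseq L'.+1 u) (size_nseq _ _) inC (@adm_full _ _ a).
  rewrite [head _ _]/= [behead _]/= in Et.
  have allE : all (pred1 a) (behead u ++ flatten (nseq L' u)).
    rewrite all_cat; apply/andP; split.
      by rewrite Hu; case: (k) => //= k'; apply/all_pred1P; rewrite size_nseq.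
    by apply: all_flat_nseq; apply/all_pred1P; rewrite -Hu.
  rewrite Et in allE.
  have tu : t = nseq (size t) u.
    apply/all_pred1P/allP => v vt /=; apply/eqP; apply: same.
      exact: (allP tC).
    exact: all_flat allE _ vt.
  move: Et; rewrite tu => /(f_equal size).
  rewrite size_cat !size_flat_nseq size_behead -/k => hk.
  have k1 : k = 1.
    move: k0 hk; case: (k) => // k2 _; case: (leqP (size t) L') => hm hk.
      have := leq_mul hm (leqnn k2.+1); lia.
    have := leq_mul hm (leqnn k2.+1); lia.
  by rewrite Hu k1 in uC'.
split.
  move=> wC; case: w wC => [|b w] wC; first by rewrite wC in nilC.
  case: w wC => // c w wC.
  have ne : [:: b] != [:: b, c & w] by rewrite eqseq_cons andbF.
  by move: (Cpre _ _ (key b) wC ne); rewrite /= eqxx.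
by case: w => [|b [|]] //= _; exact: key.
Qed.
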